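(* Let $S\ge 2$. As $m\to\infty$, $$B(m,m,\dots,m)\sim\frac{S^{Sm+\frac12}}{(2\pi m)^{\frac{S-1}{2}}\,(S-1)^S},$$ where $B$ has $S$ arguments all equal to $m$.
   Context: For positive integers $m_1,\dots,m_S$, $B(m_1,\dots,m_S)=\sum_{\ell_1=0}^{m_1-1}\cdots\sum_{\ell_S=0}^{m_S-1}\frac{(\ell_1+\dots+\ell_S)!}{\ell_1!\cdots\ell_S!}$. *)

(* Defs.v *)
From Stdlib Require Import Reals Lra Lia Arith List.
Open Scope R_scope.

Definition multinom (t : list nat) : R :=
  INR (fact (list_sum t)) / fold_right Rmult 1 (map (fun l => INR (fact l)) t).

(* sum_tuples [m_1;...;m_S] f = sum_{l_1=0}^{m_1-1} ... sum_{l_S=0}^{m_S-1} f [l_1;...;l_S] *)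
Fixpoint sum_tuples (ms : list nat) (f : list nat -> R) : R :=
  match ms with
  | nil => f nil
  | m :: ms' =>
      fold_right Rplus 0 (map (fun l => sum_tuples ms' (fun t => f (l :: t))) (seq 0 m))
  end.

Definition B (ms : list nat) : R := sum_tuples ms multinom.

(* Main.v *)
Require Import Defs.
From Stdlib Require Import Reals Lra Lia Arith List FunctionalExtensionality.
From Coquelicot Require Import Coquelicot.
Open Scope R_scope.

Definition W (n : nat) := RInt (fun x => sin x ^ n) 0 (PI/2).

Lemma W_is n : is_RInt (fun x => sin x ^ n) 0 (PI/2) (W n).
Proof.
  unfold W. apply (RInt_correct (V:=R_CompleteNormedModule)). apply ex_RInt_continuous. intros z _.
  apply continuity_pt_filterlim. reg.
Qed.

Lemma W_rec_is n :
  is_RInt (fun x => INR (n+2) * sin x ^ (n+2) - INR (n+1) * sin x ^ n) 0 (PI/2) 0.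
Proof.
  assert (H := is_RInt_derive (V:=R_CompleteNormedModule) (fun x => - cos x * sin x ^ (n+1))
     (fun x => INR (n+2) * sin x ^ (n+2) - INR (n+1) * sin x ^ n) 0 (PI/2)).
  assert (H3 : is_RInt (fun x => INR (n+2) * sin x ^ (n+2) - INR (n+1) * sin x ^ n) 0 (PI/2)
     (minus (- cos (PI/2) * sin (PI/2) ^ (n+1)) (- cos 0 * sin 0 ^ (n+1)))).
  { apply H.
  - intros x _. auto_derive; [easy|].
    replace (n+1)%nat with (S n) by lia. replace (n+2)%nat with (S (S n)) by lia.
    rewrite !S_INR. simpl pred.
    assert (H1 := sin2 x). unfold Rsqr in H1.
    simpl.
    replace (- cos x * (1 * cos x * ((INR n + 1) * sin x ^ n))) with
      (-(cos x * cos x) * ((INR n + 1) * sin x ^ n)) by ring.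
    replace (cos x * cos x) with (1 - sin x * sin x) by lra. ring.
  - intros x _. apply continuity_pt_filterlim. reg. }
  assert (E : minus (- cos (PI/2) * sin (PI/2) ^ (n+1)) (- cos 0 * sin 0 ^ (n+1)) = 0).
  { rewrite cos_PI2, sin_0, pow_i by lia. unfold minus, plus, opp; simpl. ring. }
  rewrite E in H3. exact H3.
Qed.

Lemma W_rec n : INR (n+2) * W (n+2) = INR (n+1) * W n.
Proof.
  assert (H := is_RInt_minus _ _ 0 (PI/2) _ _ (is_RInt_scal _ 0 (PI/2) (INR (n+2)) _ (W_is (n+2)))
                 (is_RInt_scal _ 0 (PI/2) (INR (n+1)) _ (W_is n))).
  assert (H' : is_RInt (fun x => INR (n+2) * sin x ^ (n+2) - INR (n+1) * sin x ^ n) 0 (PI/2)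
     (minus (scal (INR (n + 2)) (W (n + 2))) (scal (INR (n + 1)) (W n)))).
  { eapply is_RInt_ext; [|exact H]. intros; reflexivity. }
  apply (is_RInt_unique (V:=R_CompleteNormedModule)) in H'.
  assert (H2 := is_RInt_unique (V:=R_CompleteNormedModule) _ _ _ _ (W_rec_is n)).
  rewrite H' in H2. clear H. rename H2 into H.
 unfold minus, plus, opp, scal in H; simpl in H.
  unfold mult in H; simpl in H. lra.
Qed.

Lemma W0 : W 0 = PI/2.
Proof.
  unfold W. simpl. rewrite RInt_const. unfold scal; simpl. unfold mult; simpl. lra.
Qed.

Lemma W1 : W 1 = 1.
Proof.
  assert (H := is_RInt_derive (V:=R_CompleteNormedModule) (fun x => - cos x) (fun x => sin x ^ 1) 0 (PI/2)).
  assert (H3 : is_RInt (fun x => sin x ^ 1) 0 (PI/2) (minus (- cos (PI/2)) (- cos 0))).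
  { apply H.
    - intros x _. auto_derive; [easy|]. ring.
    - intros x _. apply continuity_pt_filterlim. reg. }
  apply (is_RInt_unique (V:=R_CompleteNormedModule)) in H3. unfold W. rewrite H3.
  rewrite cos_PI2, cos_0. unfold minus, plus, opp; simpl. ring.
Qed.

Lemma W_decr n : W (S n) <= W n.
Proof.
  unfold W. apply RInt_le.
  - assert (PI2 := PI_RGT_0). lra.
  - apply (ex_RInt_continuous (V:=R_CompleteNormedModule)). intros z _. apply continuity_pt_filterlim. reg.
  - apply (ex_RInt_continuous (V:=R_CompleteNormedModule)). intros z _. apply continuity_pt_filterlim. reg.
  - intros x [H1 H2]. simpl.
    assert (0 <= sin x) by (apply sin_ge_0; assert (PI2 := PI_RGT_0); lra).
    assert (sin x <= 1) by apply (proj2 (SIN_bound x)).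
    assert (0 <= sin x ^ n) by (apply pow_le; lra).
    nra.
Qed.

Lemma W_pos n : 0 < W n.
Proof.
  induction n as [n IH] using (well_founded_induction Wf_nat.lt_wf).
  destruct n as [|[|n]].
  - rewrite W0. assert (PI2 := PI_RGT_0). lra.
  - rewrite W1. lra.
  - assert (H := W_rec n). replace (S (S n)) with (n+2)%nat by lia.
    assert (0 < W n) by (apply IH; lia).
    assert (0 < INR (n+2)) by (apply lt_0_INR; lia).
    assert (0 < INR (n+1)) by (apply lt_0_INR; lia).
    assert (0 < INR (n+2) * W (n+2)) by nra. nra.
Qed.

Lemma W_prod n : INR (n+1) * W (n+1) * W n = PI/2.
Proof.
  induction n.
  - simpl. rewrite W0, W1. lra.
  - replace (S n + 1)%nat with (n+2)%nat by lia. replace (S n) with (n+1)%nat by lia.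
    rewrite W_rec. rewrite <- IHn. ring.
Qed.

Lemma W_even n : W (2*n) = PI/2 * INR (fact (2*n)) / (4^n * INR (fact n)^2).
Proof.
  induction n.
  - simpl. rewrite W0. lra.
  - assert (H := W_rec (2*n)).
    replace (2 * S n)%nat with (2*n+2)%nat by lia.
    assert (0 < INR (2*n+2)) by (apply lt_0_INR; lia).
    apply (Rmult_eq_reg_l (INR (2*n+2))); [|lra]. rewrite H, IHn.
    replace (2*n+2)%nat with (S (S (2*n))) by lia.
    rewrite !fact_simpl, !mult_INR. replace (S n) with (n+1)%nat by lia.
    replace (2*n+1)%nat with (S (2*n)) by lia.
    rewrite !S_INR, mult_INR. simpl (INR 2).
    assert (INR (fact n) <> 0) by apply INR_fact_neq_0.
    assert (0 <= INR n) by apply pos_INR.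
    rewrite pow_add, plus_INR. simpl (INR 1). simpl (4^1).
    field. split; [auto|]. split; [lra|]. apply pow_nonzero. lra.
Qed.

Lemma Wallis_bounds n : (1 <= n)%nat ->
  PI / (2 * (2 * INR n + 1)) <= W (2*n) ^ 2 <= PI / (4 * INR n).
Proof.
  intros Hn.
  assert (P1 := W_prod (2*n)).
  assert (P2 := W_prod (2*n-1)).
  replace (2*n-1+1)%nat with (2*n)%nat in P2 by lia.
  assert (D1 := W_decr (2*n)). assert (D2 := W_decr (2*n-1)).
  replace (S (2*n-1)) with (2*n)%nat in D2 by lia.
  replace (S (2*n)) with (2*n+1)%nat in D1 by lia.
  assert (Q1 := W_pos (2*n)). assert (Q2 := W_pos (2*n+1)). assert (Q3 := W_pos (2*n-1)).
  rewrite plus_INR, mult_INR in P1. simpl (INR 2) in P1. simpl (INR 1) in P1.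
  replace (INR (2*n)) with (2 * INR n) in P2 by (rewrite mult_INR; simpl; ring).
  assert (1 <= INR n) by (apply (le_INR 1); lia).
  assert (A1 : W (2*n+1) * W (2*n) <= W (2*n) * W (2*n)) by (apply Rmult_le_compat_r; lra).
  assert (A2 : W (2*n) * W (2*n) <= W (2*n) * W (2*n-1)) by (apply Rmult_le_compat_l; lra).
  split.
  - apply (Rmult_le_reg_l (2 * (2 * INR n + 1))); [lra|].
    field_simplify; [|lra].
    assert (0 <= (4 * INR n + 2) * (W (2*n) * W (2*n) - W (2*n+1) * W (2*n))) by (apply Rmult_le_pos; lra).
    nra.
  - apply (Rmult_le_reg_l (4 * INR n)); [lra|].
    field_simplify; [|lra].
    assert (0 <= (4 * INR n) * (W (2*n) * W (2*n-1) - W (2*n) * W (2*n))) by (apply Rmult_le_pos; lra).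
    nra.
Qed.


Lemma nonneg_deriv_ge (f df : R -> R) (y : R) :
  1 <= y ->
  (forall x, 1 <= x -> is_derive f x (df x)) ->
  (forall x, 1 <= x -> 0 <= df x) ->
  f 1 <= f y.
Proof.
  intros Hy Hd Hp.
  destruct (Req_dec y 1) as [->|Hne]; [lra|].
  destruct (MVT_gen f 1 y df) as [c [Hc E]].
  - intros x Hx. apply Hd. rewrite Rmin_left in Hx by lra. lra.
  - intros x Hx. rewrite Rmin_left in Hx by lra.
    apply continuity_pt_filterlim. apply (ex_derive_continuous (V:=R_NormedModule)).
    exists (df x). apply Hd. lra.
  - rewrite Rmin_left in Hc by lra. rewrite Rmax_right in Hc by lra.
    assert (0 <= df c) by (apply Hp; lra).
    assert (0 <= df c * (y - 1)) by (apply Rmult_le_pos; lra). lra.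
Qed.

Lemma ln_lower y : 1 <= y -> 2 * (y - 1) / (y + 1) <= ln y.
Proof.
  intros Hy.
  assert (H := nonneg_deriv_ge (fun x => ln x - 2 * (x - 1) / (x + 1))
     (fun x => (x-1)^2 / (x * (x+1)^2)) y Hy).
  cbv beta in H. rewrite ln_1 in H.
  assert (0 <= 2 * (1 - 1) / (1 + 1) + 0) by (unfold Rdiv; lra).
  enough (0 - 2 * (1 - 1) / (1 + 1) <= ln y - 2 * (y - 1) / (y + 1)) by (unfold Rdiv in *; lra).
  apply H.
  - intros x Hx. auto_derive. { repeat split; lra. }
    field. lra.
  - intros x Hx. apply Rmult_le_pos. { apply pow2_ge_0. }
    apply Rlt_le, Rinv_0_lt_compat. apply Rmult_lt_0_compat; [lra|]. apply pow_lt. lra.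
Qed.

Lemma ln_upper y : 1 <= y -> ln y <= (y * y - 1) / (2 * y).
Proof.
  intros Hy.
  assert (H := nonneg_deriv_ge (fun x => (x * x - 1) / (2 * x) - ln x)
     (fun x => (x-1)^2 / (2 * x^2)) y Hy).
  cbv beta in H. rewrite ln_1 in H.
  enough ((1 * 1 - 1) / (2 * 1) - 0 <= (y * y - 1) / (2 * y) - ln y) by (unfold Rdiv in *; lra).
  apply H.
  - intros x Hx. auto_derive. { repeat split; lra. }
    field. lra.
  - intros x Hx. apply Rmult_le_pos. { apply pow2_ge_0. }
    apply Rlt_le, Rinv_0_lt_compat. apply Rmult_lt_0_compat; [lra|]. apply pow_lt. lra.
Qed.

Definition st (n : nat) := ln (INR (fact n)) + INR n - (INR n + /2) * ln (INR n).

Lemma INR_fact_pos n : 0 < INR (fact n).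
Proof. apply lt_0_INR, lt_O_fact. Qed.

Lemma st_step n : (1 <= n)%nat ->
  st n - st (S n) = (INR n + /2) * ln (INR (S n) / INR n) - 1.
Proof.
  intros Hn. unfold st.
  assert (0 < INR n) by (apply lt_0_INR; lia).
  assert (0 < INR (S n)) by (apply lt_0_INR; lia).
  rewrite fact_simpl, mult_INR, ln_mult by (auto using INR_fact_pos).
  rewrite ln_div by auto. rewrite S_INR. ring.
Qed.

Lemma st_bounds n : (1 <= n)%nat ->
  0 <= st n - st (S n) <= / (2 * INR n) - / (2 * INR (S n)).
Proof.
  intros Hn. rewrite st_step by auto.
  assert (Hx : 1 <= INR n) by (apply (le_INR 1); lia).
  rewrite S_INR. set (x := INR n) in *.
  assert (Hy : 1 <= (x + 1) / x) by (apply (Rmult_le_reg_r x); [lra|]; field_simplify; lra).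
  assert (L := ln_lower _ Hy). assert (U := ln_upper _ Hy).
  replace (2 * ((x + 1) / x - 1) / ((x + 1) / x + 1)) with (2 / (2 * x + 1)) in L by (field; lra).
  replace (((x + 1) / x * ((x + 1) / x) - 1) / (2 * ((x + 1) / x)))
    with ((2 * x + 1) / (2 * x * (x + 1))) in U by (field; lra).
  assert (P : 0 <= x + /2) by lra.
  split.
  - assert (A := Rmult_le_compat_l _ _ _ P L).
    replace ((x + /2) * (2 / (2 * x + 1))) with 1 in A by (field; lra). lra.
  - assert (A := Rmult_le_compat_l _ _ _ P U).
    replace ((x + /2) * ((2 * x + 1) / (2 * x * (x + 1))))
      with (1 + / (4 * x * (x + 1))) in A by (field; lra).
    replace (/ (2 * x) - / (2 * (x + 1))) with (/ (2 * x * (x + 1))) by (field; lra).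
    assert (/ (4 * x * (x + 1)) <= / (2 * x * (x + 1))).
    { apply Rinv_le_contravar; [|nra]. apply Rmult_lt_0_compat; lra. }
    lra.
Qed.

Lemma cv_const c : Un_cv (fun _ => c) c.
Proof. intros e He. exists 0%nat. intros. unfold Rdist. rewrite Rminus_diag, Rabs_R0. lra. Qed.

Lemma cv_inv_S : Un_cv (fun n => / INR (S n)) 0.
Proof.
  intros e He. destruct (archimed (/ e)) as [H1 _].
  assert (0 <= IZR (up (/ e))) by (assert (0 < / e) by (apply Rinv_0_lt_compat; lra); lra).
  destruct (IZN (up (/ e))) as [N HN]. { apply le_IZR. simpl. lra. }
  exists N. intros n Hn. unfold Rdist. rewrite Rminus_0_r.
  assert (0 < INR (S n)) by (apply lt_0_INR; lia).
  rewrite Rabs_right by (apply Rle_ge, Rlt_le, Rinv_0_lt_compat; lra).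
  rewrite HN, <- INR_IZR_INZ in H1.
  assert (INR N <= INR n) by (apply le_INR; lia).
  rewrite S_INR in *.
  apply (Rmult_lt_reg_l (INR n + 1)); [lra|]. rewrite Rinv_r by lra.
  assert (/ e < INR n + 1) by lra.
  apply (Rmult_lt_reg_l (/ e)); [apply Rinv_0_lt_compat; lra|].
  replace (/ e * ((INR n + 1) * e)) with (INR n + 1) by (field; lra). lra.
Qed.

Lemma cv_shift a l : Un_cv (fun n => a (S n)) l -> Un_cv a l.
Proof.
  intros H e He. destruct (H e He) as [N HN]. exists (S N). intros n Hn.
  destruct n as [|n]; [lia|]. apply HN. lia.
Qed.

Lemma cv_sub a l (f : nat -> nat) : Un_cv a l -> (forall n, (n <= f n)%nat) ->
  Un_cv (fun n => a (f n)) l.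
Proof.
  intros H Hf e He. destruct (H e He) as [N HN]. exists N. intros n Hn.
  apply HN. specialize (Hf n). lia.
Qed.

Lemma cv_ext a b l : (forall n, a n = b n) -> Un_cv a l -> Un_cv b l.
Proof. intros E H e He. destruct (H e He) as [N HN]. exists N. intros. rewrite <- E. auto. Qed.

Lemma cv_scal c a l : Un_cv a l -> Un_cv (fun n => c * a n) (c * l).
Proof. intros H. apply (CV_mult (fun _ => c)); auto using cv_const. Qed.

Lemma cv_exp a l : Un_cv a l -> Un_cv (fun n => exp (a n)) (exp l).
Proof.
  intros H. apply (continuity_seq exp); auto.
  apply derivable_continuous_pt, derivable_pt_exp.
Qed.

Definition u (k : nat) := st (S k).

Lemma u_decr : Un_decreasing u.
Proof. intros k. unfold u. assert (H := st_bounds (S k) ltac:(lia)). lra. Qed.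

Lemma u_lb k : u 0 - /2 <= u k - / (2 * INR (S k)).
Proof.
  induction k.
  - simpl. replace (2 * 1) with 2 by ring. lra.
  - assert (H := st_bounds (S k) ltac:(lia)). unfold u in *. lra.
Qed.

Lemma u_has_lb : has_lb u.
Proof.
  exists (- (u 0 - /2)). intros r [i ->].
  assert (H := u_lb i).
  assert (0 < / (2 * INR (S i))) by (apply Rinv_0_lt_compat; assert (0 < INR (S i)) by (apply lt_0_INR; lia); lra).
  unfold opp_seq. lra.
Qed.

Definition sigma : R := proj1_sig (decreasing_cv u u_decr u_has_lb).

Lemma st_cv : Un_cv st sigma.
Proof.
  unfold sigma. destruct (decreasing_cv u u_decr u_has_lb) as [l Hl]. simpl.
  apply cv_shift. exact Hl.
Qed.


Lemma ln_fact_st k : (1 <= k)%nat ->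
  ln (INR (fact k)) = st k - INR k + (INR k + /2) * ln (INR k).
Proof. intros. unfold st. ring. Qed.

Lemma lnW n : (1 <= n)%nat ->
  2 * ln (W (2*n)) + ln (INR n) = 2 * ln (PI/2) + ln 2 + 2 * (st (2*n) - 2 * st n).
Proof.
  intros Hn. rewrite W_even.
  assert (HP := PI_RGT_0).
  assert (Hn' : 0 < INR n) by (apply lt_0_INR; lia).
  assert (F1 := INR_fact_pos (2*n)). assert (F2 := INR_fact_pos n).
  assert (P4 : 0 < 4 ^ n) by (apply pow_lt; lra).
  rewrite (ln_div (PI / 2 * INR (fact (2 * n)))) by
    (try apply Rmult_lt_0_compat; try apply pow_lt; lra).
  rewrite (ln_mult (PI/2)) by lra.
  rewrite (ln_mult (4^n)) by (try apply pow_lt; lra).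
  rewrite !ln_pow by lra.
  rewrite !ln_fact_st by lia.
  rewrite mult_INR. simpl (INR 2). rewrite ln_mult by lra.
  replace 4 with (2*2) by ring. rewrite ln_mult by lra.
  replace (ln (1+1)) with (ln 2) by (f_equal; ring). field.
Qed.

Lemma sigma_val : 2 * sigma = ln (2 * PI).
Proof.
  assert (HP := PI_RGT_0).
  set (E := fun n => 2 * ln (W (2 * S n)) + ln (INR (S n))).
  set (L := 2 * ln (PI/2) + ln 2 + 2 * (sigma - 2 * sigma)).
  assert (HE : Un_cv E L).
  { apply (cv_ext (fun n => 2 * ln (PI/2) + ln 2 + 2 * (st (2 * S n) - 2 * st (S n)))).
    { intros n. unfold E. rewrite lnW by lia. reflexivity. }
    apply CV_plus; [apply cv_const|]. apply cv_scal. apply CV_minus.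
    - apply (cv_sub st sigma (fun n => 2 * S n)%nat st_cv). intros; lia.
    - apply cv_scal. apply (cv_sub st sigma S st_cv). intros; lia. }
  assert (Hexp : forall n, exp (E n) = W (2 * S n) ^ 2 * INR (S n)).
  { intros n. unfold E. assert (0 < W (2 * S n)) by apply W_pos.
    assert (0 < INR (S n)) by (apply lt_0_INR; lia).
    rewrite exp_plus, exp_ln by lra. replace (2 * ln (W (2 * S n))) with (ln (W (2 * S n)) + ln (W (2 * S n))) by ring.
    rewrite exp_plus, exp_ln by lra. ring. }
  assert (C := cv_exp _ _ HE).
  assert (U : exp L <= PI / 4).
  { apply (Rle_cv_lim (Un := fun n => exp (E n)) (Vn := fun _ => PI/4)); auto using cv_const.
    intros n. rewrite Hexp. assert (B := Wallis_bounds (S n) ltac:(lia)).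
    assert (0 < INR (S n)) by (apply lt_0_INR; lia).
    assert (A := Rmult_le_compat_r (INR (S n)) _ _ (Rlt_le _ _ H) (proj2 B)).
    replace (PI / (4 * INR (S n)) * INR (S n)) with (PI / 4) in A by (field; lra). lra. }
  assert (Lo : PI / 4 <= exp L).
  { apply (Rle_cv_lim (Un := fun n => PI / 4 - PI/4 * / INR (S n)) (Vn := fun n => exp (E n))); auto.
    - intros n. rewrite Hexp. assert (B := Wallis_bounds (S n) ltac:(lia)).
      assert (0 < INR (S n)) by (apply lt_0_INR; lia).
      assert (A := Rmult_le_compat_r (INR (S n)) _ _ (Rlt_le _ _ H) (proj1 B)).
      eapply Rle_trans; [|exact A].
      apply (Rmult_le_reg_r (INR (S n) * (2 * (2 * INR (S n) + 1)))). { nra. }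
      field_simplify; [|lra|lra]. nra.
    - assert (H0 := CV_minus _ _ _ _ (cv_const (PI/4)) (cv_scal (PI/4) _ _ cv_inv_S)).
      rewrite Rmult_0_r, Rminus_0_r in H0. exact H0. }
  assert (EL : L = ln (PI / 4)).
  { rewrite <- (ln_exp L). f_equal. lra. }
  unfold L in EL.
  rewrite (ln_div PI 4) in EL by lra. rewrite (ln_div PI 2) in EL by lra.
  rewrite ln_mult by lra. replace 4 with (2*2) in EL by ring. rewrite ln_mult in EL by lra.
  lra.
Qed.


Definition sumL (g : nat -> R) (L : list nat) := fold_right Rplus 0 (map g L).
Definition prodR (g : nat -> R) (t : list nat) := fold_right Rmult 1 (map g t).

Lemma sumL_le g1 g2 L : (forall l, In l L -> g1 l <= g2 l) -> sumL g1 L <= sumL g2 L.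
Proof.
  unfold sumL. induction L as [|a L IH]; intros H; simpl; [lra|].
  apply Rplus_le_compat; [apply H; simpl; auto|]. apply IH. intros; apply H; simpl; auto.
Qed.

Lemma sumL_ext g1 g2 L : (forall l, In l L -> g1 l = g2 l) -> sumL g1 L = sumL g2 L.
Proof.
  intros H; apply Rle_antisym; apply sumL_le; intros l Hl; rewrite (H l Hl); lra.
Qed.

Lemma sumL_scal c g L : sumL (fun l => g l * c) L = sumL g L * c.
Proof. unfold sumL. induction L; simpl; [ring|]. rewrite IHL. ring. Qed.

Lemma sumL_app g L1 L2 : sumL g (L1 ++ L2) = sumL g L1 + sumL g L2.
Proof. unfold sumL. induction L1; simpl; [ring|]. rewrite IHL1. ring. Qed.

Lemma sumL_nonneg g L : (forall l, In l L -> 0 <= g l) -> 0 <= sumL g L.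
Proof.
  intros H. replace 0 with (sumL (fun _ => 0) L).
  - apply sumL_le. auto.
  - clear H. unfold sumL. induction L; simpl; [ring|]. rewrite IHL. ring.
Qed.

Lemma sum_tuples_le ms f g :
  (forall t, Forall2 (fun l m => (l < m)%nat) t ms -> f t <= g t) ->
  sum_tuples ms f <= sum_tuples ms g.
Proof.
  revert f g. induction ms as [|m ms IH]; intros f g H; simpl.
  - apply H. constructor.
  - apply (sumL_le (fun l => sum_tuples ms (fun t => f (l :: t)))
                   (fun l => sum_tuples ms (fun t => g (l :: t)))).
    intros l Hl. apply in_seq in Hl. apply IH. intros t Ht. apply H. constructor; auto. lia.
Qed.

Lemma sum_tuples_scal ms c f : sum_tuples ms (fun t => f t * c) = sum_tuples ms f * c.
Proof.
  revert f. induction ms as [|m ms IH]; intros f; simpl; [ring|].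
  change (sumL (fun l => sum_tuples ms (fun t => f (l :: t) * c)) (seq 0 m) =
          sumL (fun l => sum_tuples ms (fun t => f (l :: t))) (seq 0 m) * c).
  rewrite <- (sumL_scal c (fun l => sum_tuples ms (fun t => f (l :: t)))).
  unfold sumL. f_equal. apply map_ext. intros l. apply IH.
Qed.

Lemma sum_tuples_plus ms f g : sum_tuples ms (fun t => f t + g t) = sum_tuples ms f + sum_tuples ms g.
Proof.
  revert f g. induction ms as [|m ms IH]; intros f g; simpl; [ring|].
  induction (seq 0 m); simpl; [ring|]. rewrite IHl, IH. ring.
Qed.

Lemma sum_tuples_prod ms g :
  sum_tuples ms (prodR g) = fold_right Rmult 1 (map (fun m => sumL g (seq 0 m)) ms).
Proof.
  revert g. induction ms as [|m ms IH]; intros g; simpl; [reflexivity|].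
  change (sumL (fun l => sum_tuples ms (fun t => prodR g (l :: t))) (seq 0 m) =
    sumL g (seq 0 m) * fold_right Rmult 1 (map (fun m0 : nat => sumL g (seq 0 m0)) ms)).
  rewrite <- sumL_scal. apply sumL_ext. intros l _.
  rewrite <- (IH g). rewrite Rmult_comm, <- (sum_tuples_scal ms (g l) (prodR g)).
  f_equal. apply functional_extensionality_dep. intros t. unfold prodR. simpl. ring.
Qed.

Lemma fold_mult_repeat (c : R) (m d : nat) : fold_right Rmult 1 (map (fun _ : nat => c) (repeat m d)) = c ^ d.
Proof. induction d; simpl; [ring|]. rewrite IHd. ring. Qed.

Lemma sum_tuples_prod_repeat m d g :
  sum_tuples (repeat m d) (prodR g) = (sumL g (seq 0 m)) ^ d.
Proof.
  rewrite sum_tuples_prod.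
  rewrite <- (fold_mult_repeat (sumL g (seq 0 m)) m d). f_equal.
  induction d; simpl; [reflexivity|]. f_equal. auto.
Qed.


Lemma INR_fact_pos' n : 0 < INR (fact n).
Proof. apply lt_0_INR, lt_O_fact. Qed.

Lemma M_def t : multinom t = INR (fact (list_sum t)) / prodR (fun l => INR (fact l)) t.
Proof. reflexivity. Qed.

Lemma prodR_pos g t : (forall l, 0 < g l) -> 0 < prodR g t.
Proof. intros H. unfold prodR. induction t; simpl; [lra|]. apply Rmult_lt_0_compat; auto. Qed.

Lemma prodR_app g a b : prodR g (a ++ b) = prodR g a * prodR g b.
Proof. unfold prodR. induction a; simpl; [ring|]. rewrite IHa. ring. Qed.

Lemma prodR_cons g x t : prodR g (x :: t) = g x * prodR g t.
Proof. reflexivity. Qed.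

Lemma prodR_le g1 g2 t : (forall l, In l t -> 0 <= g1 l <= g2 l) -> prodR g1 t <= prodR g2 t.
Proof.
  unfold prodR. induction t; intros H; simpl; [lra|].
  assert (H1 := H a (or_introl eq_refl)).
  assert (0 <= fold_right Rmult 1 (map g1 t)).
  { clear IHt. induction t; simpl; [lra|]. apply Rmult_le_pos.
    - apply (H a0). simpl; auto.
    - apply IHt. intros l Hl. apply H. destruct Hl; simpl; auto. }
  apply Rmult_le_compat; try lra. apply IHt. intros; apply H; simpl; auto.
Qed.

Lemma prodR_nonneg g t : (forall l, In l t -> 0 <= g l) -> 0 <= prodR g t.
Proof.
  intros H. replace 0 with (prodR (fun _ => 0) t * 0) by ring.
  destruct t. { unfold prodR; simpl; lra. }
  replace (prodR (fun _ => 0) (n :: t) * 0) with (prodR (fun _ => 0) (n :: t)) by (unfold prodR; simpl; ring).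
  apply prodR_le. intros l Hl; split; [lra|]. auto.
Qed.

Lemma prodR_zero g t l : In l t -> g l = 0 -> prodR g t = 0.
Proof.
  unfold prodR. induction t; simpl; [tauto|]. intros [->|H] E.
  - rewrite E; ring.
  - rewrite IHt; auto; ring.
Qed.

Lemma prodR_ext g1 g2 t : (forall l, In l t -> g1 l = g2 l) -> prodR g1 t = prodR g2 t.
Proof.
  unfold prodR. induction t; simpl; intros H; [auto|]. rewrite H, IHt; auto.
Qed.

Lemma prodR_div c h t : (forall l, h l <> 0) ->
  prodR (fun l => c / h l) t = c ^ length t / prodR h t.
Proof.
  intros H. unfold prodR. induction t; simpl; [field|].
  rewrite IHt. field. split; [|auto].
  assert (0 < prodR (fun l => Rabs (h l) + 1) t) by (apply prodR_pos; intros; assert (0 <= Rabs (h l)) by apply Rabs_pos; lra).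
  clear IHt. induction t; simpl; [lra|]. apply Rmult_integral_contrapositive; split; auto.
  apply IHt. apply prodR_pos. intros; assert (0 <= Rabs (h l)) by apply Rabs_pos; lra.
Qed.

Lemma sum_le_len t m : List.Forall (fun l => (l <= m)%nat) t -> (list_sum t <= length t * m)%nat.
Proof. intros H; induction H; simpl; lia. Qed.

Lemma prodR_pow_sub c m t : List.Forall (fun l => (l <= m)%nat) t ->
  prodR (fun l => c ^ (m - l)) t = c ^ (length t * m - list_sum t).
Proof.
  intros H. induction H; unfold prodR in *; simpl.
  - replace (0 * m - 0)%nat with 0%nat by lia. reflexivity.
  - rewrite IHForall. rewrite <- pow_add. f_equal.
    assert (Hs := sum_le_len l m H0). lia.
Qed.

Lemma fact_ratio a n :
  INR (S a) ^ n <= INR (fact (a + n)) / INR (fact a) <= INR (a + n) ^ n.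
Proof.
  assert (Fa := INR_fact_pos' a).
  induction n.
  - rewrite Nat.add_0_r. simpl. replace (INR (fact a) / INR (fact a)) with 1 by (field; lra). lra.
  - replace (a + S n)%nat with (S (a + n)) by lia.
    rewrite fact_simpl, mult_INR.
    replace (INR (S (a + n)) * INR (fact (a + n)) / INR (fact a))
      with (INR (S (a + n)) * (INR (fact (a + n)) / INR (fact a))) by (field; lra).
    assert (0 <= INR (S a)) by apply pos_INR.
    assert (INR (S a) <= INR (S (a + n))) by (apply le_INR; lia).
    assert (INR (a + n) <= INR (S (a + n))) by (apply le_INR; lia).
    assert (0 <= INR (a + n)) by apply pos_INR.
    split; rewrite <- !tech_pow_Rmult.
    + apply Rmult_le_compat; try lra. apply pow_le; lra.
    + apply Rmult_le_compat_l; [lra|]. eapply Rle_trans; [apply IHn|].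
      apply pow_incr. lra.
Qed.

Lemma fact_ratio' a b : (a <= b)%nat ->
  INR (S a) ^ (b - a) <= INR (fact b) / INR (fact a) <= INR b ^ (b - a).
Proof.
  intros H. assert (F := fact_ratio a (b - a)).
  replace (a + (b - a))%nat with b in F by lia. exact F.
Qed.


Lemma list_sum_repeat m d : list_sum (repeat m d) = (d * m)%nat.
Proof. induction d; simpl; lia. Qed.

Lemma prodR_repeat g m d : prodR g (repeat m d) = g m ^ d.
Proof. unfold prodR. induction d; simpl; [ring|]. rewrite IHd. ring. Qed.

Lemma M_repeat m d : multinom (repeat m d) = INR (fact (d * m)) / INR (fact m) ^ d.
Proof. rewrite M_def, list_sum_repeat, prodR_repeat. reflexivity. Qed.

Lemma M_pos t : 0 < multinom t.
Proof.
  rewrite M_def. apply Rdiv_lt_0_compat; [apply INR_fact_pos'|].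
  apply prodR_pos. intros; apply INR_fact_pos'.
Qed.

Lemma M_ratio m d t : length t = d ->
  multinom t = multinom (repeat m d) * prodR (fun l => INR (fact m) / INR (fact l)) t
               * (INR (fact (list_sum t)) / INR (fact (d * m))).
Proof.
  intros Hl. rewrite prodR_div by (intros; apply Rgt_not_eq, INR_fact_pos').
  rewrite M_repeat, M_def, Hl.
  assert (0 < prodR (fun l => INR (fact l)) t) by (apply prodR_pos; intros; apply INR_fact_pos').
  assert (A := INR_fact_pos' m). assert (B := INR_fact_pos' (d * m)).
  assert (0 < INR (fact m) ^ d) by (apply pow_lt; lra).
  field. lra.
Qed.

Lemma list_sum_app' a b : list_sum (a ++ b) = (list_sum a + list_sum b)%nat.
Proof. induction a; simpl; lia. Qed.

Lemma M_step a x b :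
  multinom (a ++ S x :: b) * INR (S x) = multinom (a ++ x :: b) * INR (S (list_sum (a ++ x :: b))).
Proof.
  rewrite !M_def, !prodR_app, !prodR_cons.
  replace (list_sum (a ++ S x :: b)) with (S (list_sum (a ++ x :: b)))
    by (rewrite !list_sum_app'; simpl; lia).
  rewrite (fact_simpl x), (fact_simpl (list_sum (a ++ x :: b))), !mult_INR.
  assert (0 < prodR (fun l => INR (fact l)) a) by (apply prodR_pos; intros; apply INR_fact_pos').
  assert (0 < prodR (fun l => INR (fact l)) b) by (apply prodR_pos; intros; apply INR_fact_pos').
  assert (A := INR_fact_pos' x). assert (0 < INR (S x)) by (apply lt_0_INR; lia).
  field. repeat split; lra.
Qed.

Lemma min_decomp (t : list nat) : t <> nil ->
  exists a x b, t = a ++ x :: b /\ forall y, In y t -> (x <= y)%nat.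
Proof.
  induction t as [|y t IH]; intros H; [congruence|].
  destruct t as [|z t'].
  - exists nil, y, nil. split; [reflexivity|]. intros w [->|[]]. lia.
  - destruct IH as [a [x [b [E Hm]]]]; [congruence|].
    destruct (le_lt_dec y x) as [Hyx|Hxy].
    + exists nil, y, (z :: t'). split; [reflexivity|].
      intros w [->|Hw]; [lia|]. specialize (Hm w Hw). lia.
    + exists (y :: a), x, b. split; [rewrite E; reflexivity|].
      intros w [->|Hw]; [lia|]. auto.
Qed.

Lemma min_sum t x : (forall y, In y t -> (x <= y)%nat) -> (length t * x <= list_sum t)%nat.
Proof.
  induction t as [|y t IH]; intros H; simpl; [lia|].
  assert (x <= y)%nat by (apply H; simpl; auto).
  assert (length t * x <= list_sum t)%nat by (apply IH; intros; apply H; simpl; auto).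
  lia.
Qed.

Lemma Forall_repeat_eq t m : List.Forall (fun l => (l <= m)%nat) t ->
  list_sum t = (length t * m)%nat -> t = repeat m (length t).
Proof.
  intros HF; induction HF as [|y t Hy Ht IH]; simpl; intros E; [reflexivity|].
  assert (Hs := sum_le_len t m Ht).
  assert (y = m) by lia. subst. f_equal. apply IH. lia.
Qed.

Lemma dom_nonzero d m (Hd : (2 <= d)%nat) : forall n t,
  length t = d -> List.Forall (fun l => (l <= m)%nat) t -> (1 <= list_sum t)%nat ->
  (d * m - list_sum t)%nat = n ->
  multinom t <= (2/3) ^ n * multinom (repeat m d).
Proof.
  induction n as [|n IH]; intros t Hl Hf Hs Hn.
  - assert (Hs' := sum_le_len t m Hf).
    assert (E := Forall_repeat_eq t m Hf ltac:(lia)). rewrite Hl in E. rewrite <- E. simpl. lra.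
  - assert (Hne : t <> nil) by (intros ->; simpl in Hs; lia).
    destruct (min_decomp t Hne) as [a [x [b [E Hm]]]].
    assert (Hms := min_sum t x Hm).
    assert (Hs' := sum_le_len t m Hf).
    assert (Hxm : (x < m)%nat).
    { destruct (le_lt_dec m x) as [H1|H1]; [|exact H1].
      exfalso. assert (d * m <= d * x)%nat by (apply Nat.mul_le_mono_l; auto). lia. }
    set (t' := a ++ S x :: b).
    assert (Hl' : length t' = d) by (unfold t'; rewrite <- Hl, E, !length_app; simpl; lia).
    assert (Hs'' : list_sum t' = S (list_sum t)) by (unfold t'; rewrite E, !list_sum_app'; simpl; lia).
    assert (Hf' : List.Forall (fun l => (l <= m)%nat) t').
    { apply Forall_forall. intros w Hw. unfold t' in Hw. apply in_app_or in Hw.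
      rewrite Forall_forall in Hf.
      destruct Hw as [Hw|[<-|Hw]]; [apply Hf; rewrite E; apply in_or_app; auto| lia |
        apply Hf; rewrite E; apply in_or_app; simpl; auto]. }
    assert (IH' := IH t' Hl' Hf' ltac:(lia) ltac:(lia)).
    assert (St := M_step a x b). fold t' in St. rewrite <- E in St.
    assert (Hr : (3 * S x <= 2 * S (list_sum t))%nat).
    { rewrite Hl in Hms. assert (2 * x <= d * x)%nat by (apply Nat.mul_le_mono_r; lia). lia. }
    apply le_INR in Hr. rewrite !mult_INR in Hr. simpl (INR 3) in Hr. simpl (INR 2) in Hr.
    assert (P1 := M_pos t'). assert (P2 := M_pos t).
    assert (0 < INR (S x)) by (apply lt_0_INR; lia).
    assert (0 < INR (S (list_sum t))) by (apply lt_0_INR; lia).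
    (* multinom t = multinom t' * S x / S sum <= 2/3 multinom t' *)
    assert (multinom t <= 2/3 * multinom t').
    { apply (Rmult_le_reg_r (INR (S (list_sum t)))); [lra|].
      rewrite <- St. nra. }
    rewrite <- tech_pow_Rmult.
    assert (0 <= 2/3) by lra. nra.
Qed.


Lemma prodR_fact_zero t : list_sum t = 0%nat -> prodR (fun l => INR (fact l)) t = 1.
Proof.
  unfold prodR. induction t; simpl; intros H; [reflexivity|].
  assert (a = 0%nat) by lia. subst. rewrite IHt by lia. simpl. ring.
Qed.

Lemma dom d m t (Hd : (2 <= d)%nat) (Hm : (1 <= m)%nat) :
  length t = d -> List.Forall (fun l => (l <= m)%nat) t ->
  multinom t <= 3/2 * (2/3) ^ (d * m - list_sum t) * multinom (repeat m d).
Proof.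
  intros Hl Hf. assert (MD := M_pos (repeat m d)).
  destruct (le_lt_dec 1 (list_sum t)) as [H1|H1].
  - assert (H := dom_nonzero d m Hd _ t Hl Hf H1 eq_refl).
    assert (0 <= (2/3) ^ (d * m - list_sum t)) by (apply pow_le; lra). nra.
  - assert (E0 : list_sum t = 0%nat) by lia.
    assert (Mt : multinom t = 1).
    { rewrite M_def, E0, prodR_fact_zero by auto. simpl. field. }
    set (t' := 1%nat :: repeat 0%nat (d - 1)).
    assert (Hl' : length t' = d) by (unfold t'; simpl; rewrite repeat_length; lia).
    assert (Hs' : list_sum t' = 1%nat) by (unfold t'; simpl; rewrite list_sum_repeat; lia).
    assert (Hf' : List.Forall (fun l => (l <= m)%nat) t').
    { unfold t'. constructor; [lia|]. apply Forall_forall. intros w Hw.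
      apply repeat_spec in Hw. lia. }
    assert (H := dom_nonzero d m Hd _ t' Hl' Hf' ltac:(lia) eq_refl).
    assert (Mt' : multinom t' = 1).
    { rewrite M_def, Hs'. unfold t'. rewrite prodR_cons, prodR_repeat. simpl. rewrite pow1. field. }
    rewrite Mt, E0. rewrite Mt', Hs' in H.
    replace (d * m - 0)%nat with (S (d * m - 1)) by nia.
    rewrite <- tech_pow_Rmult. lra.
Qed.

Lemma Forall2_repeat t m d : Forall2 (fun l m => (l < m)%nat) t (repeat m d) ->
  length t = d /\ List.Forall (fun l => (l < m)%nat) t.
Proof.
  revert t. induction d; intros t H; simpl in H; inversion H; subst; simpl; auto.
  destruct (IHd _ H4). split; auto.
Qed.

Lemma forallb_false_ex (f : nat -> bool) t : forallb f t = false -> exists l, In l t /\ f l = false.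
Proof.
  induction t; simpl; intros H; [discriminate|].
  destruct (f a) eqn:E; simpl in H.
  - destruct (IHt H) as [l [H1 H2]]. exists l; auto.
  - exists a; auto.
Qed.

Lemma pow_div' a b n : b <> 0 -> (a / b) ^ n = a ^ n / b ^ n.
Proof. intros. unfold Rdiv. rewrite Rpow_mult_distr, pow_inv. reflexivity. Qed.

Lemma lower_tuple d m K t (Hd : (2 <= d)%nat) (Hm : (1 <= m)%nat) (HK : (K <= m)%nat) :
  Forall2 (fun l m => (l < m)%nat) t (repeat m d) ->
  prodR (fun l => if (m - K <=? l)%nat then (INR (m - K) / INR (d * m)) ^ (m - l) else 0) t
    * multinom (repeat m d) <= multinom t.
Proof.
  intros H2. destruct (Forall2_repeat _ _ _ H2) as [Hl Hf].
  assert (MD := M_pos (repeat m d)). assert (Mt := M_pos t).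
  assert (Hf' : List.Forall (fun l => (l <= m)%nat) t) by (eapply Forall_impl; [|exact Hf]; simpl; intros; lia).
  assert (Hdm : 0 < INR (d * m)) by (apply lt_0_INR; nia).
  destruct (forallb (fun l => (m - K <=? l)%nat) t) eqn:Hb.
  - rewrite forallb_forall in Hb.
    rewrite (prodR_ext _ (fun l => (INR (m - K) / INR (d * m)) ^ (m - l))).
    2:{ intros l Hl'. rewrite (Hb l Hl'). reflexivity. }
    rewrite prodR_pow_sub by auto. rewrite Hl.
    set (n := (d * m - list_sum t)%nat).
    rewrite (M_ratio m d t Hl).
    assert (Hs := sum_le_len t m Hf'). rewrite Hl in Hs.
    assert (P : INR (m - K) ^ n <= prodR (fun l => INR (fact m) / INR (fact l)) t).
    { unfold n. rewrite <- Hl. rewrite <- prodR_pow_sub by auto.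
      apply prodR_le. intros l Hl'. rewrite Forall_forall in Hf'. assert (Hlm := Hf' l Hl').
      assert (B := fact_ratio' l m Hlm). specialize (Hb l Hl'). apply Nat.leb_le in Hb.
      split; [apply pow_le, pos_INR|]. eapply Rle_trans; [|apply B].
      apply pow_incr. split; [apply pos_INR|]. apply le_INR. lia. }
    assert (F : / INR (d * m) ^ n <= INR (fact (list_sum t)) / INR (fact (d * m))).
    { assert (B := fact_ratio' (list_sum t) (d * m) Hs). fold n in B.
      assert (A1 := INR_fact_pos' (list_sum t)). assert (A2 := INR_fact_pos' (d * m)).
      assert (0 < INR (d * m) ^ n) by (apply pow_lt; lra).
      replace (INR (fact (list_sum t)) / INR (fact (d * m))) with
        (/ (INR (fact (d * m)) / INR (fact (list_sum t)))) by (field; lra).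
      apply Rinv_le_contravar; [|lra].
      apply Rdiv_lt_0_compat; lra. }
    rewrite pow_div' by lra.
    assert (0 <= INR (m - K) ^ n) by (apply pow_le, pos_INR).
    assert (0 <= / INR (d * m) ^ n) by (apply Rlt_le, Rinv_0_lt_compat, pow_lt; lra).
    set (PP := prodR (fun l : nat => INR (fact m) / INR (fact l)) t) in *.
    set (FF := INR (fact (list_sum t)) / INR (fact (d * m))) in *.
    assert (X : INR (m - K) ^ n * / INR (d * m) ^ n <= PP * FF) by (apply Rmult_le_compat; auto).
    replace (multinom (repeat m d) * PP * FF) with ((PP * FF) * multinom (repeat m d)) by ring.
    apply Rmult_le_compat_r; [lra|]. exact X.
  - destruct (forallb_false_ex _ _ Hb) as [l [Hl' Hl'']].
    rewrite (prodR_zero _ t l Hl'). { lra. }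
    rewrite Hl''. reflexivity.
Qed.

Lemma Rdiv_le_0_compat a b : 0 <= a -> 0 < b -> 0 <= a / b.
Proof. intros. unfold Rdiv. apply Rmult_le_pos; [auto|]. apply Rlt_le, Rinv_0_lt_compat; auto. Qed.

Lemma pow_le_dec x K n : 0 <= x <= 1 -> (K <= n)%nat -> x ^ n <= x ^ K.
Proof.
  intros Hx HKn. replace n with (K + (n - K))%nat by lia. rewrite pow_add.
  assert (x ^ (n - K) <= 1) by (rewrite <- (pow1 (n - K)); apply pow_incr; lra).
  assert (0 <= x ^ K) by (apply pow_le; lra).
  assert (0 <= x ^ (n - K)) by (apply pow_le; lra). nra.
Qed.

Lemma upper_tuple d m K t (Hd : (2 <= d)%nat) (Hm : (1 <= m)%nat) (HK : (K < m)%nat) :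
  Forall2 (fun l m => (l < m)%nat) t (repeat m d) ->
  multinom t <=
  (prodR (fun l => (INR m / INR (d * m - K)) ^ (m - l)) t
   + 3/2 * (8/9) ^ K * prodR (fun l => (3/4) ^ (m - l)) t) * multinom (repeat m d).
Proof.
  intros H2. destruct (Forall2_repeat _ _ _ H2) as [Hl Hf].
  assert (MD := M_pos (repeat m d)). assert (Mt := M_pos t).
  assert (Hf' : List.Forall (fun l => (l <= m)%nat) t) by (eapply Forall_impl; [|exact Hf]; simpl; intros; lia).
  assert (Hdm : 0 < INR (d * m - K)) by (apply lt_0_INR; nia).
  rewrite !prodR_pow_sub by auto. rewrite Hl.
  assert (Hs := sum_le_len t m Hf'). rewrite Hl in Hs.
  set (n := (d * m - list_sum t)%nat).
  set (y := INR m / INR (d * m - K)).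
  assert (Hy : 0 <= y) by (unfold y; apply Rdiv_le_0_compat; [apply pos_INR|lra]).
  assert (0 <= y ^ n) by (apply pow_le; lra).
  assert (0 <= (3/4) ^ n) by (apply pow_le; lra).
  assert (0 <= (8/9) ^ K) by (apply pow_le; lra).
  destruct (le_lt_dec n K) as [HnK|HnK].
  - rewrite (M_ratio m d t Hl).
    assert (P : prodR (fun l => INR (fact m) / INR (fact l)) t <= INR m ^ n).
    { unfold n. rewrite <- Hl. rewrite <- prodR_pow_sub by auto.
      apply prodR_le. intros l Hl'. rewrite Forall_forall in Hf'. assert (Hlm := Hf' l Hl').
      assert (B := fact_ratio' l m Hlm).
      split; [|apply B]. eapply Rle_trans; [|apply B]. apply pow_le, pos_INR. }
    assert (P0 : 0 <= prodR (fun l => INR (fact m) / INR (fact l)) t).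
    { apply prodR_nonneg. intros l _. apply Rdiv_le_0_compat; [apply pos_INR|apply INR_fact_pos']. }
    assert (F : INR (fact (list_sum t)) / INR (fact (d * m)) <= / INR (d * m - K) ^ n).
    { assert (B := fact_ratio' (list_sum t) (d * m) Hs). fold n in B.
      assert (A1 := INR_fact_pos' (list_sum t)). assert (A2 := INR_fact_pos' (d * m)).
      assert (0 < INR (d * m - K) ^ n) by (apply pow_lt; lra).
      replace (INR (fact (list_sum t)) / INR (fact (d * m))) with
        (/ (INR (fact (d * m)) / INR (fact (list_sum t)))) by (field; lra).
      apply Rinv_le_contravar; [lra|].
      eapply Rle_trans; [|apply (proj1 B)]. apply pow_incr. split; [lra|].
      apply le_INR. unfold n in HnK. lia. }
    assert (F0 : 0 <= INR (fact (list_sum t)) / INR (fact (d * m))).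
    { apply Rdiv_le_0_compat; [apply pos_INR|apply INR_fact_pos']. }
    assert (X : prodR (fun l => INR (fact m) / INR (fact l)) t * (INR (fact (list_sum t)) / INR (fact (d * m)))
                <= y ^ n).
    { unfold y. rewrite pow_div' by lra. apply Rmult_le_compat; auto. }
    set (PP := prodR (fun l : nat => INR (fact m) / INR (fact l)) t) in *.
    set (FF := INR (fact (list_sum t)) / INR (fact (d * m))) in *.
    assert (0 <= 3/2 * (8/9) ^ K * (3/4) ^ n) by (apply Rmult_le_pos; [|lra]; apply Rmult_le_pos; lra).
    replace (multinom (repeat m d) * PP * FF) with ((PP * FF) * multinom (repeat m d)) by ring.
    apply Rmult_le_compat_r; lra.
  - assert (D := dom d m t Hd Hm Hl Hf'). fold n in D.
    replace ((2/3) ^ n) with ((8/9) ^ n * (3/4) ^ n) in D by (rewrite <- Rpow_mult_distr; f_equal; field).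
    assert ((8/9) ^ n <= (8/9) ^ K) by (apply pow_le_dec; [lra|lia]).
    assert ((8/9) ^ n * (3/4) ^ n <= (8/9) ^ K * (3/4) ^ n) by (apply Rmult_le_compat_r; lra).
    nra.
Qed.


Definition qs (c : R) (m : nat) := sumL (fun l => c ^ (m - l)) (seq 0 m).

Lemma qs_0 c : qs c 0 = 0.
Proof. reflexivity. Qed.

Lemma qs_S c m : qs c (S m) = c * (qs c m + 1).
Proof.
  unfold qs. rewrite seq_S, sumL_app. simpl (0 + m)%nat.
  replace (sumL (fun l => c ^ (S m - l)) (m :: nil)) with c
    by (unfold sumL; cbn [map fold_right]; replace (S m - m)%nat with 1%nat by lia; ring).
  rewrite (sumL_ext _ (fun l => c ^ (m - l) * c)).
  2:{ intros l Hl. apply in_seq in Hl. replace (S m - l)%nat with (S (m - l)) by lia. simpl. ring. }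
  rewrite sumL_scal. ring.
Qed.

Lemma qs_nonneg c m : 0 <= c -> 0 <= qs c m.
Proof. intros. induction m; [rewrite qs_0; lra|]. rewrite qs_S. apply Rmult_le_pos; lra. Qed.

Lemma qs_bound c m : 0 <= c < 1 -> qs c m <= c / (1 - c).
Proof.
  intros Hc. induction m.
  - rewrite qs_0. apply Rdiv_le_0_compat; lra.
  - rewrite qs_S. apply (Rmult_le_reg_r (1 - c)); [lra|].
    replace (c / (1 - c) * (1 - c)) with c by (field; lra).
    assert (c * (qs c m + 1) <= c * (c / (1 - c) + 1)) by (apply Rmult_le_compat_l; lra).
    replace (c * (c / (1 - c) + 1)) with (c / (1 - c)) in H by (field; lra).
    assert (A : c / (1 - c) * (1 - c) = c) by (field; lra). nra.
Qed.

Lemma map_seq_shift (f : nat -> R) a b K :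
  map f (seq (a + b) K) = map (fun j => f (a + j)%nat) (seq b K).
Proof.
  revert b. induction K; intros b; simpl; [reflexivity|].
  f_equal. replace (S (a + b)) with (a + S b)%nat by lia. apply IHK.
Qed.

Lemma sumL_zero L : sumL (fun _ => 0) L = 0.
Proof. unfold sumL. induction L; simpl; [auto|]. rewrite IHL. ring. Qed.

Lemma lower_sum x m K : (K <= m)%nat ->
  sumL (fun l => if (m - K <=? l)%nat then x ^ (m - l) else 0) (seq 0 m) = qs x K.
Proof.
  intros HK.
  assert (E : seq 0 m = seq 0 (m - K) ++ seq (0 + (m - K)) K) by (rewrite <- seq_app; f_equal; lia).
  rewrite E, sumL_app.
  rewrite (sumL_ext _ (fun _ => 0) (seq 0 (m - K))).
  2:{ intros l Hl. apply in_seq in Hl. destruct (m - K <=? l)%nat eqn:E2; [apply Nat.leb_le in E2; lia|auto]. }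
  rewrite sumL_zero.
  unfold sumL at 1. simpl (0 + (m - K))%nat.
  replace (seq (m - K) K) with (seq ((m - K) + 0) K) by (f_equal; lia).
  rewrite map_seq_shift. unfold qs, sumL. rewrite Rplus_0_l. f_equal. apply map_ext_in.
  intros j Hj. apply in_seq in Hj.
  replace (m - K <=? m - K + j)%nat with true by (symmetry; apply Nat.leb_le; lia).
  f_equal. lia.
Qed.

Definition QB d m := B (repeat m d) / multinom (repeat m d).

Lemma QB_lower d m K (Hd : (2 <= d)%nat) (Hm : (1 <= m)%nat) (HK : (K <= m)%nat) :
  (qs (INR (m - K) / INR (d * m)) K) ^ d <= QB d m.
Proof.
  unfold QB, B. assert (MD := M_pos (repeat m d)).
  apply (Rmult_le_reg_r (multinom (repeat m d))); [lra|].
  replace (sum_tuples (repeat m d) multinom / multinom (repeat m d) * multinom (repeat m d))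
    with (sum_tuples (repeat m d) multinom) by (field; lra).
  rewrite <- (lower_sum _ m K HK).
  rewrite <- sum_tuples_prod_repeat. rewrite <- sum_tuples_scal.
  apply sum_tuples_le. intros t Ht. apply lower_tuple; auto.
Qed.

Lemma QB_upper d m K (Hd : (2 <= d)%nat) (Hm : (1 <= m)%nat) (HK : (K < m)%nat) :
  QB d m <= ((INR m / INR (d * m - K)) / (1 - INR m / INR (d * m - K))) ^ d
            + 3/2 * (8/9) ^ K * 3 ^ d.
Proof.
  unfold QB, B. assert (MD := M_pos (repeat m d)).
  set (y := INR m / INR (d * m - K)).
  assert (Hdm : INR m < INR (d * m - K)) by (apply lt_INR; nia).
  assert (Hm' : 0 < INR m) by (apply lt_0_INR; lia).
  assert (Hy : 0 <= y < 1).
  { unfold y. split; [apply Rdiv_le_0_compat; lra|].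
    apply (Rmult_lt_reg_r (INR (d * m - K))); [lra|]. field_simplify; lra. }
  apply (Rmult_le_reg_r (multinom (repeat m d))); [lra|].
  replace (sum_tuples (repeat m d) multinom / multinom (repeat m d) * multinom (repeat m d))
    with (sum_tuples (repeat m d) multinom) by (field; lra).
  eapply Rle_trans.
  { apply sum_tuples_le. intros t Ht. apply (upper_tuple d m K t Hd Hm HK Ht). }
  rewrite sum_tuples_scal.
  apply Rmult_le_compat_r; [lra|]. fold y.
  replace (sum_tuples (repeat m d) (fun t => prodR (fun l => y ^ (m - l)) t +
             3 / 2 * (8 / 9) ^ K * prodR (fun l => (3 / 4) ^ (m - l)) t))
    with (sum_tuples (repeat m d) (prodR (fun l => y ^ (m - l))) +
          sum_tuples (repeat m d) (prodR (fun l => (3 / 4) ^ (m - l))) * (3 / 2 * (8 / 9) ^ K)).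
  2:{ rewrite <- sum_tuples_scal, <- sum_tuples_plus. f_equal.
      apply functional_extensionality; intros; ring. }
  rewrite !sum_tuples_prod_repeat. fold (qs y m). fold (qs (3/4) m).
  assert (A1 : qs y m ^ d <= (y / (1 - y)) ^ d).
  { apply pow_incr. split; [apply qs_nonneg; lra|]. apply qs_bound; lra. }
  assert (A2 : qs (3/4) m ^ d <= 3 ^ d).
  { apply pow_incr. split; [apply qs_nonneg; lra|].
    assert (H3 : qs (3/4) m <= (3/4) / (1 - 3/4)) by (apply qs_bound; lra).
    replace ((3/4) / (1 - 3/4)) with 3 in H3 by field. exact H3. }
  assert (0 <= (8/9) ^ K) by (apply pow_le; lra).
  assert (A3 : qs (3/4) m ^ d * (3/2 * (8/9) ^ K) <= 3 ^ d * (3/2 * (8/9) ^ K))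
    by (apply Rmult_le_compat_r; [|auto]; apply Rmult_le_pos; lra).
  lra.
Qed.


Lemma cv_pow a l d : Un_cv a l -> Un_cv (fun m => a m ^ d) (l ^ d).
Proof.
  intros H. induction d; simpl.
  - apply cv_const.
  - apply CV_mult; auto.
Qed.

Lemma cv_qs a l K : Un_cv a l -> Un_cv (fun m => qs (a m) K) (qs l K).
Proof.
  intros H. induction K.
  - rewrite qs_0. apply (cv_ext (fun _ => 0)); [intros; rewrite qs_0; auto|]. apply cv_const.
  - rewrite qs_S. apply (cv_ext (fun m => a m * (qs (a m) K + 1))); [intros; rewrite qs_S; auto|].
    apply CV_mult; auto. apply CV_plus; auto. apply cv_const.
Qed.

Lemma cv_ext_ev a b l N : (forall n, (N <= n)%nat -> a n = b n) -> Un_cv a l -> Un_cv b l.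
Proof.
  intros E H e He. destruct (H e He) as [N0 HN]. exists (max N N0). intros n Hn.
  rewrite <- E by lia. apply HN. lia.
Qed.

Lemma cv_inv a l : l <> 0 -> Un_cv a l -> Un_cv (fun n => / a n) (/ l).
Proof.
  intros Hl H. apply (continuity_seq Rinv); auto.
  apply (continuity_pt_inv (fun x => x)); auto. apply derivable_continuous_pt, derivable_pt_id.
Qed.

Lemma cv_invINR : Un_cv (fun n => / INR n) 0.
Proof. apply cv_shift. exact cv_inv_S. Qed.

Lemma qs_closed c K : c <> 1 -> qs c K = c * (1 - c ^ K) / (1 - c).
Proof.
  intros Hc. induction K.
  - rewrite qs_0. simpl. field. lra.
  - rewrite qs_S, IHK. simpl. field. lra.
Qed.

Lemma cv_geom x : Rabs x < 1 -> Un_cv (fun n => x ^ n) 0.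
Proof.
  intros Hx e He. destruct (pow_lt_1_zero x Hx e He) as [N HN]. exists N. intros n Hn.
  unfold Rdist. rewrite Rminus_0_r. auto.
Qed.

Lemma cv_cms k j a : Un_cv a 0 -> Un_cv (fun n => k - j * a n) k.
Proof.
  intros H. assert (H0 := CV_minus _ _ _ _ (cv_const k) (cv_scal j _ _ H)).
  rewrite Rmult_0_r, Rminus_0_r in H0. exact H0.
Qed.

Section Lim.
Variable d : nat.
Hypothesis Hd : (2 <= d)%nat.

Let c := / INR d.

Lemma c_bounds : 0 < c < 1.
Proof.
  unfold c. assert (2 <= INR d) by (apply (le_INR 2); lia).
  split; [apply Rinv_0_lt_compat; lra|]. rewrite <- Rinv_1. apply Rinv_lt_contravar; lra.
Qed.

Lemma F1 : Un_cv (fun K => (qs c K) ^ d) ((c / (1 - c)) ^ d).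
Proof.
  assert (Hc := c_bounds).
  apply cv_pow. apply (cv_ext (fun K => c / (1 - c) - c / (1 - c) * c ^ K)).
  { intros K. rewrite qs_closed by lra. field. lra. }
  apply cv_cms. apply cv_geom. rewrite Rabs_right; lra.
Qed.

Lemma F3 K : Un_cv (fun m => (qs (INR (m - K) / INR (d * m)) K) ^ d) ((qs c K) ^ d).
Proof.
  apply cv_pow, cv_qs.
  apply (cv_ext_ev (fun m => c - (INR K * c) * / INR m) _ _ (S K)).
  { intros n Hn. rewrite minus_INR by lia. rewrite mult_INR. unfold c.
    assert (0 < INR n) by (apply lt_0_INR; lia). assert (0 < INR d) by (apply lt_0_INR; lia).
    field. lra. }
  apply cv_cms, cv_invINR.
Qed.

Lemma F4 K : Un_cv (fun m => ((INR m / INR (d * m - K)) / (1 - INR m / INR (d * m - K))) ^ d)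
                  ((c / (1 - c)) ^ d).
Proof.
  assert (Hc := c_bounds).
  apply cv_pow.
  assert (Hy : Un_cv (fun m => INR m / INR (d * m - K)) c).
  { apply (cv_ext_ev (fun m => / (INR d - INR K * / INR m)) _ _ (S K)).
    { intros n Hn. assert (0 < INR n) by (apply lt_0_INR; lia).
      rewrite minus_INR by nia. rewrite mult_INR.
      assert (INR K < INR n) by (apply lt_INR; lia).
      assert (2 <= INR d) by (apply (le_INR 2); lia).
      assert (INR K < INR d * INR n) by nra.
      field. split; [lra|]. intro H9.
      apply (f_equal (fun z => z * INR n)) in H9.
      replace ((INR d - INR K * / INR n) * INR n) with (INR d * INR n - INR K) in H9 by (field; lra). nra. }
    unfold c. apply cv_inv. { assert (2 <= INR d) by (apply (le_INR 2); lia). lra. }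
    apply cv_cms, cv_invINR. }
  unfold Rdiv at 2. apply CV_mult; auto. apply cv_inv; [lra|].
  apply CV_minus; auto. apply cv_const.
Qed.

Lemma QB_cv : Un_cv (QB d) ((c / (1 - c)) ^ d).
Proof.
  assert (Hc := c_bounds).
  set (L := (c / (1 - c)) ^ d).
  intros e He.
  destruct (F1 (e/3)) as [K1 HK1]; [lra|].
  assert (P3 : 0 < 3 / 2 * 3 ^ d) by (assert (0 < 3 ^ d) by (apply pow_lt; lra); lra).
  destruct (cv_geom (8/9) ltac:(rewrite Rabs_right; lra) (e / 3 / (3/2 * 3 ^ d))) as [K2 HK2].
  { apply Rdiv_lt_0_compat; lra. }
  set (K := max K1 K2).
  destruct (F3 K (e/3)) as [N1 HN1]; [lra|].
  destruct (F4 K (e/3)) as [N2 HN2]; [lra|].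
  exists (max (max N1 N2) (S K)). intros m Hm.
  assert (A1 := HK1 K ltac:(unfold K; lia)).
  assert (A2 := HK2 K ltac:(unfold K; lia)).
  assert (A3 := HN1 m ltac:(lia)).
  assert (A4 := HN2 m ltac:(lia)).
  assert (Lo := QB_lower d m K Hd ltac:(lia) ltac:(lia)).
  assert (Up := QB_upper d m K Hd ltac:(lia) ltac:(lia)).
  unfold Rdist in *. rewrite Rminus_0_r in A2.
  rewrite Rabs_right in A2 by (apply Rle_ge, pow_le; lra).
  apply Rabs_def2 in A1. apply Rabs_def2 in A3. apply Rabs_def2 in A4.
  assert (T : 3 / 2 * (8 / 9) ^ K * 3 ^ d < e / 3).
  { apply (Rmult_lt_compat_l (3/2 * 3 ^ d)) in A2; [|lra].
    replace (3 / 2 * 3 ^ d * (e / 3 / (3 / 2 * 3 ^ d))) with (e/3) in A2 by (field; lra).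
    lra. }
  unfold L. apply Rabs_def1; lra.
Qed.

End Lim.


Lemma main_d (d : nat) (Hd : (2 <= d)%nat) :
  Un_cv
    (fun m : nat =>
       B (repeat m d) /
       (Rpower (INR d) (INR (d * m) + / 2) /
        (Rpower (2 * PI * INR m) ((INR d - 1) / 2) * (INR d - 1) ^ d)))
    1.
Proof.
  assert (HP := PI_RGT_0).
  assert (Hd2 : 2 <= INR d) by (apply (le_INR 2); lia).
  set (G := fun m => st (d * m) - INR d * st m + (INR d - 1) / 2 * ln (2 * PI)).
  assert (HG : Un_cv G 0).
  { replace 0 with (sigma - INR d * sigma + (INR d - 1) / 2 * ln (2 * PI)).
    2:{ rewrite <- sigma_val. field. }
    unfold G. apply CV_plus; [|apply cv_const]. apply CV_minus.
    - apply (cv_sub st sigma (fun m => d * m)%nat st_cv). intros; nia.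
    - apply cv_scal, st_cv. }
  set (c := / INR d).
  assert (HQ := QB_cv d Hd). fold c in HQ.
  assert (E1 : (c / (1 - c)) ^ d * (INR d - 1) ^ d * exp 0 = 1).
  { rewrite exp_0, <- Rpow_mult_distr. unfold c. replace (/ INR d / (1 - / INR d) * (INR d - 1)) with 1
      by (field; lra). rewrite pow1. ring. }
  assert (HL := CV_mult _ _ _ _ (CV_mult _ _ _ _ HQ (cv_const ((INR d - 1) ^ d))) (cv_exp _ _ HG)).
  rewrite E1 in HL.
  apply (cv_ext_ev (fun m => QB d m * (INR d - 1) ^ d * exp (G m)) _ _ 1); [|exact HL].
  intros m Hm.
  assert (Hm' : 0 < INR m) by (apply lt_0_INR; lia).
  assert (MD := M_pos (repeat m d)).
  unfold QB. unfold Rpower.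
  assert (Hln : G m = ln (multinom (repeat m d)) + (INR d - 1) / 2 * ln (2 * PI * INR m)
                      - (INR (d * m) + / 2) * ln (INR d)).
  { unfold G. rewrite M_repeat.
    assert (F1 := INR_fact_pos' (d * m)). assert (F2 := INR_fact_pos' m).
    rewrite ln_div by (try apply pow_lt; lra). rewrite ln_pow by lra.
    rewrite !ln_fact_st by nia. rewrite mult_INR. rewrite (ln_mult (INR d) (INR m)) by lra.
    rewrite (ln_mult (2 * PI) (INR m)) by lra. field. }
  rewrite Hln. unfold Rminus. rewrite !exp_plus, exp_Ropp, exp_ln by lra.
  assert (0 < exp ((INR (d * m) + / 2) * ln (INR d))) by apply exp_pos.
  assert (0 < exp ((INR d - 1) / 2 * ln (2 * PI * INR m))) by apply exp_pos.
  assert (0 < (INR d + - 1) ^ d) by (apply pow_lt; lra).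
  field. split; [apply pow_nonzero; lra|]. split; [apply Rgt_not_eq, exp_pos|]. split; [apply Rgt_not_eq, exp_pos|]. lra.
Qed.


Theorem mainTheorem17 (S : nat) (HS : (2 <= S)%nat) :
  Un_cv
    (fun m : nat =>
       B (repeat m S) /
       (Rpower (INR S) (INR (S * m) + / 2) /
        (Rpower (2 * PI * INR m) ((INR S - 1) / 2) * (INR S - 1) ^ S)))
    1.
Proof.
  exact (main_d S HS).
Qed.
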